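(* Let $\Gamma\neq\{e\}$ be a finite subgroup of $SL(2,\mathbf{C})$, $k\in\mathbf{C}$, $c$ a complex class function on $\Gamma\setminus\{e\}$. Let $M$ be an $H_{1,k,c}(\mathbf{\Gamma}_N)$-module such that the restriction of $M$ to $\mathbf{\Gamma}_N$ is irreducible. Then the generators $x_i$, $y_i$ act by zero on $M$ for every $i=1,\dots,N$.
   Context: Let $L$ be a $2$-dimensional complex vector space with symplectic form $\omega_L$ and symplectic basis $x,y$; $\Gamma\subset Sp(L)=SL(2,\mathbf{C})$ finite. Let $V=L^{\oplus N}$, with $x_i,y_i$ (and $u_i$ for $u\in L$) the copies in the $i$-th summand. $\mathbf{\Gamma}_N=S_N\ltimes\Gamma^N$ (with $S_N$ permuting the factors) acts naturally on $V$; $\gamma_i$ denotes $\gamma\in\Gamma$ placed in the $i$-th factor of $\Gamma^N$, $s_{ij}\in S_N$ the transposition. $H_{1,k,c}(\mathbf{\Gamma}_N)$ is the quotient of the smash product $\mathbf{\Gamma}_N\sharp TV$ by the relations: for each $i$, $[x_i,y_i]=1+\frac{k}{2}\sum_{j\neq i}\sum_{\gamma\in\Gamma}s_{ij}\gamma_i\gamma_j^{-1}+\sum_{\gamma\in\Gamma\setminus\{e\}}c_\gamma\gamma_i$; and for $u,v\in L$, $i\neq j$: $[u_i,v_j]=-\frac{k}{2}\sum_{\gamma\in\Gamma}\omega_L(\gamma u,v)s_{ij}\gamma_i\gamma_j^{-1}$. *)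

(* Defs.v *)
From HB Require Import structures.
From mathcomp Require Import all_boot all_order all_algebra all_fingroup.
From mathcomp Require Import complex reals.
Set Implicit Arguments. Unset Strict Implicit. Unset Printing Implicit Defensive.
Import GRing.Theory.
Local Open Scope ring_scope.

(* L = C^2 as column vectors, symplectic basis x = e_0, y = e_1. *)

Definition omegaL (C : comNzRingType) (u v : 'cV[C]_2) : C :=
  u ord0 ord0 * v ord_max ord0 - u ord_max ord0 * v ord0 ord0.

(* Action of u_i (u in L, i-th copy) given the actions X i = x_i, Y i = y_i:
   u_i = u_x x_i + u_y y_i. *)
Definition Lop (C : comNzRingType) (M : lmodType C) (N : nat)
  (X Y : 'I_N -> M -> M) (i : 'I_N) (u : 'cV[C]_2) (m : M) : M :=
  u ord0 ord0 *: X i m + u ord_max ord0 *: Y i m.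

(* D i g = action of g placed in the i-th factor of Gamma^N (gamma_i),
   P s = action of s in S_N. These are the defining relations of the
   wreath product S_N |x Gamma^N (mathcomp convention (s*t) x = t (s x),
   hence the conjugation rule P s D_(s i) = D_i P s). *)
Definition is_GammaN_rep (C : comNzRingType) (M : lmodType C) (N : nat)
  (gT : finGroupType) (G : {group gT})
  (D : 'I_N -> gT -> {linear M -> M}) (P : 'S_N -> {linear M -> M}) : Prop :=
  (forall i m, D i 1%g m = m) /\
      (forall i, {in G &, forall g h, forall m, D i (g * h)%g m = D i g (D i h m)}) /\
      (forall i j, i != j -> {in G &, forall g h, forall m,
           D i g (D j h m) = D j h (D i g m)}) /\
      (forall m, P 1%g m = m) /\
      (forall s t m, P (s * t)%g m = P s (P t m)) /\
      (forall s i, {in G, forall g m, P s (D (s i) g m) = D i g (P s m)}).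

Definition is_subspace (C : comNzRingType) (M : lmodType C) (S : M -> Prop) : Prop :=
  S 0 /\ forall (a : C) u v, S u -> S v -> S (a *: u + v).

(* M restricted to Gamma_N is irreducible: M <> 0 and the only subspaces
   stable under all of Gamma_N (equivalently under its generators
   gamma_i, s) are 0 and M. *)
Definition GammaN_irreducible (C : comNzRingType) (M : lmodType C) (N : nat)
  (gT : finGroupType) (G : {group gT})
  (D : 'I_N -> gT -> {linear M -> M}) (P : 'S_N -> {linear M -> M}) : Prop :=
  (exists m : M, m <> 0) /\
  forall S : M -> Prop, is_subspace S ->
    (forall i g m, g \in G -> S m -> S (D i g m)) ->
    (forall s m, S m -> S (P s m)) ->
    (forall m, S m -> m = 0) \/ (forall m, S m).

(* The relations of the smash product Gamma_N # TV: g u_i g^-1 = (g.u)_i *)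
Definition smash_relations (C : comNzRingType) (M : lmodType C) (N : nat)
  (gT : finGroupType) (G : {group gT}) (rho : gT -> 'M[C]_2)
  (D : 'I_N -> gT -> {linear M -> M}) (P : 'S_N -> {linear M -> M})
  (X Y : 'I_N -> {linear M -> M}) : Prop :=
  (forall i j g u m, g \in G ->
     D j g (Lop (fun l => X l) (fun l => Y l) i u m) =
     Lop (fun l => X l) (fun l => Y l) i (if i == j then rho g *m u else u) (D j g m)) /\
  (forall s i u m,
     P s (Lop (fun l => X l) (fun l => Y l) (s i) u m) =
     Lop (fun l => X l) (fun l => Y l) i u (P s m)).

Definition H_relations (C : fieldType) (M : lmodType C) (N : nat)
  (gT : finGroupType) (G : {group gT}) (rho : gT -> 'M[C]_2) (k : C) (c : gT -> C)
  (D : 'I_N -> gT -> {linear M -> M}) (P : 'S_N -> {linear M -> M})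
  (X Y : 'I_N -> {linear M -> M}) : Prop :=
  (forall (i : 'I_N) (m : M),
     X i (Y i m) - Y i (X i m) =
       m + (k / 2%:R) *: (\sum_(j < N | j != i) \sum_(g in G)
                             P (tperm i j) (D i g (D j (g^-1)%g m)))
         + \sum_(g in G | g != 1%g) c g *: D i g m) /\
  (forall (i j : 'I_N) (u v : 'cV[C]_2) (m : M), i != j ->
     Lop (fun l => X l) (fun l => Y l) i u (Lop (fun l => X l) (fun l => Y l) j v m)
     - Lop (fun l => X l) (fun l => Y l) j v (Lop (fun l => X l) (fun l => Y l) i u m) =
       - (k / 2%:R) *: \sum_(g in G)
           omegaL (rho g *m u) v *: P (tperm i j) (D i g (D j (g^-1)%g m))).

(* Main.v *)
Require Import Defs.
From HB Require Import structures.
From mathcomp Require Import all_boot all_order all_algebra all_fingroup all_solvable all_field.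
From mathcomp Require Import complex reals.
From mathcomp Require Import ring.
Set Implicit Arguments. Unset Strict Implicit. Unset Printing Implicit Defensive.
Import GRing.Theory Num.Theory.
Local Open Scope ring_scope.

Lemma lift00 : lift ord0 (ord0 : 'I_1) = ord_max :> 'I_2.
Proof. exact: val_inj. Qed.

Lemma ord2P (i : 'I_2) : i = ord0 \/ i = ord_max.
Proof. case: i => [[|[|//]] Hi]; [left|right]; exact: val_inj. Qed.

Lemma det2 (F : comNzRingType) (A : 'M[F]_2) :
  \det A = A ord0 ord0 * A ord_max ord_max - A ord0 ord_max * A ord_max ord0.
Proof.
rewrite (expand_det_row _ ord0) !big_ord_recl big_ord0 /cofactor !det_mx11 !mxE addr0 /=.
rewrite lift00 /= expr0 expr1 mul1r !mulN1r mulrN.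
by congr (_ * A _ _ - _ * A _ _); apply: val_inj.
Qed.

Lemma mul2E (F : comNzRingType) (A B : 'M[F]_2) i j :
  (A *m B) i j = A i ord0 * B ord0 j + A i ord_max * B ord_max j.
Proof. by rewrite mxE !big_ord_recl big_ord0 addr0 lift00. Qed.

Lemma tr2E (F : comNzRingType) (A : 'M[F]_2) : \tr A = A ord0 ord0 + A ord_max ord_max.
Proof. by rewrite /mxtrace !big_ord_recl big_ord0 addr0 lift00. Qed.

Lemma mx2P (F : comNzRingType) (A B : 'M[F]_2) :
  A ord0 ord0 = B ord0 ord0 -> A ord0 ord_max = B ord0 ord_max ->
  A ord_max ord0 = B ord_max ord0 -> A ord_max ord_max = B ord_max ord_max -> A = B.
Proof.
move=> h1 h2 h3 h4; apply/matrixP => i j.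
by case: (ord2P i) => ->; case: (ord2P j) => ->.
Qed.

Lemma ord0max : (ord0 == ord_max :> 'I_2) = false. Proof. by []. Qed.
Lemma ordmax0 : (ord_max == ord0 :> 'I_2) = false. Proof. by []. Qed.

Lemma scal2E (F : comNzRingType) (a : F) i j :
  (a%:M : 'M[F]_2) i j = if i == j then a else 0.
Proof. by rewrite mxE; case: (i == j); rewrite ?mulr1n ?mulr0n. Qed.

Lemma CH2 (F : comNzRingType) (A : 'M[F]_2) :
  A *m A = \tr A *: A - (\det A)%:M.
Proof.
apply: mx2P; rewrite !mul2E !mxE tr2E det2 ?eqxx ?ord0max ?ordmax0 /=; ring.
Qed.

Definition Jm (F : comNzRingType) : 'M[F]_2 :=
  \matrix_(i, j) (if i == j then 0 else if i == ord0 then 1 else -1).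

Lemma JmE (F : comNzRingType) (A : 'M[F]_2) :
  A^T *m Jm F *m A = \det A *: Jm F.
Proof.
apply: mx2P; rewrite !mul2E !mxE det2 ?eqxx ?ord0max ?ordmax0 /=; ring.
Qed.


Lemma unit_sub1 (F : numFieldType) (A : 'M[F]_2) n :
  \det A = 1 -> (0 < n)%N -> A ^+ n = 1 -> A != 1 -> (A - 1) \in unitmx.
Proof.
move=> dA n0 An A1; rewrite unitmxE unitfE; apply: contraNN A1 => /eqP d0.
have key : \det (A - 1) = \det A - \tr A + 1.
  rewrite !det2 tr2E !mxE ?eqxx ?ord0max ?ordmax0 /= ?mulr1n ?mulr0n ?subr0; ring.
have tr2 : \tr A = 2%:R.
  have -> : \tr A = (\det A + 1) - (\det A - \tr A + 1) by ring.
  by rewrite -key d0 dA subr0.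
set Nm := A - 1.
have NN : Nm * Nm = 0.
  have ch := CH2 A; rewrite mulmxE tr2 dA in ch.
  by rewrite /Nm mulrBl !mulrBr ch mulr1 mul1r scaler_nat mulr1 mulr2n [A + A - _ - A]addrAC addrK subrr.
have AN : A = Nm + 1 by rewrite /Nm subrK.
clearbody Nm; subst A.
have Ak : forall k, (Nm + 1) ^+ k = 1 + k%:R *: Nm.
  elim=> [|k IH]; first by rewrite expr0 scale0r addr0.
  rewrite exprSr IH mulrDl !mulrDr !mul1r mulr1 -scalerAl NN scaler0 add0r.
  by rewrite [k.+1%:R]mulrS scalerDl scale1r addrA (addrC 1 Nm).
have : n%:R *: Nm = 0.
  by apply: (addrI 1); rewrite -Ak An addr0.
move/eqP; rewrite scaler_eq0 pnatr_eq0 eqn0Ngt n0 /= => /eqP ->; by rewrite add0r.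
Qed.


Lemma comm_Kpoly (F : fieldType) (K A : 'M[F]_2) :
  (K ord0 ord_max != 0) || (K ord_max ord0 != 0) || (K ord0 ord0 != K ord_max ord_max) ->
  A *m K = K *m A -> exists l mu, A = l *: K + mu%:M.
Proof.
move=> nsc AK.
have E1 : (A *m K) ord0 ord0 = (K *m A) ord0 ord0 by rewrite AK.
have E2 : (A *m K) ord0 ord_max = (K *m A) ord0 ord_max by rewrite AK.
have E3 : (A *m K) ord_max ord0 = (K *m A) ord_max ord0 by rewrite AK.
move: E1 E2 E3 nsc; rewrite !mul2E.
have Aeq : forall l mu : F, (A ord0 ord0 = l * K ord0 ord0 + mu) -> (A ord0 ord_max = l * K ord0 ord_max) ->
   (A ord_max ord0 = l * K ord_max ord0) -> (A ord_max ord_max = l * K ord_max ord_max + mu) ->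
   exists l mu, A = l *: K + mu%:M.
  move=> l mu h1 h2 h3 h4; exists l, mu; apply: mx2P; rewrite !mxE ?eqxx ?ord0max ?ordmax0 /=;
  by rewrite ?mulr1n ?mulr0n ?addr0.
move: Aeq.
move: (K ord0 ord0) (K ord0 ord_max) (K ord_max ord0) (K ord_max ord_max) => p q r s.
move: (A ord0 ord0) (A ord0 ord_max) (A ord_max ord0) (A ord_max ord_max) => a b c d.
move=> Aeq E1 E2 E3 nsc.
have e1 : b * r - q * c = 0 by rewrite -(subrr (p*a + q*c)) -{1}E1; ring.
have e2 : q * (a - d) - b * (p - s) = 0 by rewrite -(subrr (p*b + q*d)) -{1}E2; ring.
have e3 : r * (a - d) - c * (p - s) = 0 by rewrite -(subrr (r*a + s*c)) -{2}E3; ring.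
case/orP: nsc => [/orP [qn|rn]|psn].
- apply: (Aeq (b / q) (d - b / q * s)).
  + apply/eqP; rewrite -subr_eq0; apply/eqP.
    have -> : a - (b / q * p + (d - b / q * s)) = (q * (a - d) - b * (p - s)) / q by field.
    by rewrite e2 mul0r.
  + by rewrite mulfVK.
  + apply/eqP; rewrite -subr_eq0; apply/eqP.
    have -> : c - b / q * r = - (b * r - q * c) / q by field.
    by rewrite e1 oppr0 mul0r.
  + ring.
- apply: (Aeq (c / r) (d - c / r * s)).
  + apply/eqP; rewrite -subr_eq0; apply/eqP.
    have -> : a - (c / r * p + (d - c / r * s)) = (r * (a - d) - c * (p - s)) / r by field.
    by rewrite e3 mul0r.
  + apply/eqP; rewrite -subr_eq0; apply/eqP.
    have -> : b - c / r * q = (b * r - q * c) / r by field.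
    by rewrite e1 mul0r.
  + by rewrite mulfVK.
  + ring.
- have psn' : p - s != 0 by rewrite subr_eq0.
  apply: (Aeq ((a - d) / (p - s)) (d - (a - d) / (p - s) * s)).
  + field; done.
  + apply/eqP; rewrite -subr_eq0; apply/eqP.
    have -> : b - (a - d) / (p - s) * q = - (q * (a - d) - b * (p - s)) / (p - s) by field.
    by rewrite e2 oppr0 mul0r.
  + apply/eqP; rewrite -subr_eq0; apply/eqP.
    have -> : c - (a - d) / (p - s) * r = - (r * (a - d) - c * (p - s)) / (p - s) by field.
    by rewrite e3 oppr0 mul0r.
  + ring.
Qed.

Lemma comm_K (F : fieldType) (K A1 A2 : 'M[F]_2) :
  (K ord0 ord_max != 0) || (K ord_max ord0 != 0) || (K ord0 ord0 != K ord_max ord_max) ->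
  A1 *m K = K *m A1 -> A2 *m K = K *m A2 -> A1 *m A2 = A2 *m A1.
Proof.
move=> nsc h1 h2; have [l [mu ->]] := comm_Kpoly nsc h2.
by rewrite mulmxDr mulmxDl -scalemxAr h1 scalemxAl scalar_mxC.
Qed.


Section Odd.
Variables (F : numFieldType) (gT : finGroupType) (G : {group gT}) (rho : gT -> 'M[F]_2).
Hypotheses (rho_morph : {in G &, forall g h, rho (g * h)%g = rho g *m rho h})
  (rho_inj : {in G &, injective rho})
  (rho_det : {in G, forall g, \det (rho g) = 1}).

Lemma rho_unit g : g \in G -> rho g \is a GRing.unit.
Proof. by move=> Gg; rewrite unitmxE rho_det ?unitr1. Qed.

Lemma rho1 : rho 1%g = 1.
Proof.
have e := rho_morph (group1 G) (group1 G); rewrite mulg1 mulmxE in e.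
by rewrite -(mulVr (rho_unit (group1 G))) {3}e mulKr // rho_unit.
Qed.

Lemma rhoV g : g \in G -> rho (g^-1)%g = (rho g)^-1.
Proof.
move=> Gg; have e := rho_morph Gg (groupVr Gg); rewrite mulgV rho1 mulmxE in e.
by rewrite -[LHS](mulKr (rho_unit Gg)) -e mulr1.
Qed.

Lemma rhoX g n : g \in G -> rho (g ^+ n)%g = rho g ^+ n.
Proof.
move=> Gg; elim: n => [|n IH]; first by rewrite expg0 expr0 rho1.
by rewrite expgS rho_morph ?groupX // IH mulmxE exprS.
Qed.

Lemma rho_eq1 g : g \in G -> (rho g == 1) = (g == 1%g).
Proof.
move=> Gg; apply/eqP/eqP => [e|->]; last exact: rho1.
by apply: rho_inj; rewrite ?group1 // rho1.
Qed.

Lemma rho_addV g : g \in G -> rho g + rho (g^-1)%g = (\tr (rho g))%:M.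
Proof.
move=> Gg; have ch := CH2 (rho g); rewrite rho_det // mulmxE in ch.
rewrite rhoV //; apply: (mulrI (rho_unit Gg)).
rewrite mulrDr divrr ?rho_unit // ch -scalemx1 -!mulmxE scalar_mxC mul_scalar_mx.
by rewrite scale1r subrK.
Qed.


Lemma sumS_inv : \sum_(g in G) rho (g^-1)%g = \sum_(g in G) rho g.
Proof.
rewrite [RHS](reindex_inj invg_inj) /=; apply: eq_bigl => g; by rewrite groupV.
Qed.

Lemma sumS_mul h : h \in G -> rho h * \sum_(g in G) rho g = \sum_(g in G) rho g.
Proof.
move=> Gh; rewrite mulr_sumr [RHS](reindex_inj (mulgI h)) /=.
apply: eq_big => [g|g Gg]; first by rewrite groupMl.
by rewrite rho_morph // mulmxE.
Qed.

Lemma sum_tr : G :!=: 1%g -> \sum_(g in G) \tr (rho g) = 0.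
Proof.
case/trivgPn => h Gh h1.
set t := \sum_(g in G) \tr (rho g).
have S2 : \sum_(g in G) rho g + \sum_(g in G) rho g = t *: 1.
  rewrite -{2}sumS_inv -big_split /= /t scaler_suml; apply: eq_bigr => g Gg.
  by rewrite rho_addV // scalemx1.
have := sumS_mul Gh; move/(congr1 (fun M => M + M)); rewrite -mulrDr S2.
rewrite -scalerAr mulr1 => /eqP; rewrite -subr_eq0 -scalerBr scaler_eq0 subr_eq0 rho_eq1 //.
by rewrite (negbTE h1) orbF => /eqP.
Qed.

Lemma tr_sq g : g \in G -> \tr (rho (g ^+ 2)%g) = \tr (rho g) ^+ 2 - 2%:R.
Proof.
move=> Gg; rewrite rhoX // expr2 -mulmxE CH2 rho_det // mxtraceD mxtraceZ.
by rewrite raddfN /= mxtrace_scalar expr2.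
Qed.

Lemma sum_tr_sq : odd #|G| -> G :!=: 1%g ->
  \sum_(g in G) \tr (rho g) ^+ 2 = (2 * #|G|)%:R.
Proof.
move=> oG G1.
have co : coprime #|G| 2 by rewrite coprimen2.
have e : \sum_(g in G) \tr (rho (g ^+ 2)%g) = \sum_(g in G) \tr (rho g).
  rewrite [RHS](reindex_onto (fun g => g ^+ 2)%g (fun g => g ^+ expg_invn G 2)%g) /=.
    apply: eq_bigl => g; apply/idP/idP => [Gg|/andP [G2 /eqP <-]].
      by rewrite groupX //= expgK.
    by rewrite groupX.
  by move=> g Gg; rewrite -expgM mulnC expgM expgK.
move: e; rewrite sum_tr // (eq_bigr (fun g => \tr (rho g) ^+ 2 - 2%:R)); last by move=> g; apply: tr_sq.
rewrite sumrB sumr_const => /eqP; rewrite subr_eq0 => /eqP ->.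
by rewrite natrM mulr_natr.
Qed.

End Odd.


Section Odd2.
Variables (F : numFieldType) (gT : finGroupType) (G : {group gT}) (rho : gT -> 'M[F]_2).
Hypotheses (rho_morph : {in G &, forall g h, rho (g * h)%g = rho g *m rho h})
  (rho_inj : {in G &, injective rho})
  (rho_det : {in G, forall g, \det (rho g) = 1}).

Definition Eavg (B : 'M[F]_2) := \sum_(g in G) rho g *m B *m (rho g)^T.

Lemma Eavg_inv B h : h \in G -> rho h *m Eavg B *m (rho h)^T = Eavg B.
Proof.
move=> Gh; rewrite /Eavg mulmx_sumr mulmx_suml [RHS](reindex_inj (mulgI h)) /=.
apply: eq_big => [g|g Gg]; first by rewrite groupMl.
by rewrite rho_morph // trmx_mul !mulmxA.
Qed.

Lemma Eavg_sym B : B^T = B -> (Eavg B)^T = Eavg B.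
Proof.
move=> sB; rewrite /Eavg raddf_sum; apply: eq_bigr => g _ /=.
by rewrite !trmx_mul trmxK sB mulmxA.
Qed.

Lemma tr_entries (A : 'M[F]_2) :
  (A *m delta_mx ord0 ord0 *m A^T) ord0 ord0 + (A *m delta_mx ord_max ord_max *m A^T) ord_max ord_max
  + (A *m (delta_mx ord0 ord_max + delta_mx ord_max ord0) *m A^T) ord0 ord_max
  = \tr A ^+ 2 - \det A.
Proof.
rewrite !mul2E !mxE tr2E det2 ?eqxx ?ord0max ?ordmax0 /=; ring.
Qed.


Lemma exists_Eavg : odd #|G| -> G :!=: 1%g -> exists B, B^T = B /\ Eavg B != 0.
Proof.
move=> oG G1.
have key : Eavg (delta_mx ord0 ord0) ord0 ord0 + Eavg (delta_mx ord_max ord_max) ord_max ord_max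
  + Eavg (delta_mx ord0 ord_max + delta_mx ord_max ord0) ord0 ord_max = #|G|%:R.
  rewrite /Eavg !summxE -!big_split /=.
  rewrite (eq_bigr (fun g => \tr (rho g) ^+ 2 - 1)); last first.
    by move=> g Gg; rewrite tr_entries rho_det.
  rewrite sumrB sum_tr_sq // sumr_const mulnC natrM mulr_natr.
  by rewrite mulr2n addrK.
have nz : #|G|%:R != 0 :> F by rewrite pnatr_eq0 -lt0n cardG_gt0.
case E1 : (Eavg (delta_mx ord0 ord0) == 0).
  case E2 : (Eavg (delta_mx ord_max ord_max) == 0).
    exists (delta_mx ord0 ord_max + delta_mx ord_max ord0); split.
      by rewrite raddfD /= !trmx_delta addrC.
    apply/eqP => E3; move: key; rewrite (eqP E1) (eqP E2) E3 !mxE add0r => e.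
    by move: nz; rewrite -e !add0r eqxx.
  by exists (delta_mx ord_max ord_max); rewrite trmx_delta E2.
by exists (delta_mx ord0 ord0); rewrite trmx_delta E1.
Qed.

Lemma odd_abelian : odd #|G| -> G :!=: 1%g -> {in G &, forall g h, (g * h = h * g)%g}.
Proof.
move=> oG G1; have [B [sB nB]] := exists_Eavg oG G1.
set B0 := Eavg B in nB.
have sB0 : B0^T = B0 by apply: Eavg_sym.
set K := B0 *m Jm F.
have comm : forall h, h \in G -> rho h *m K = K *m rho h.
  move=> h Gh; have JA := JmE (rho h); rewrite rho_det // scale1r in JA.
  by rewrite /K -{1}JA !mulmxA /B0 Eavg_inv.
have nsc : (K ord0 ord_max != 0) || (K ord_max ord0 != 0) || (K ord0 ord0 != K ord_max ord_max).
  apply: contraR nB; rewrite !negb_or !negbK => /andP [/andP [e1 e2] e3].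
  move: e1 e2 e3; rewrite /K !mul2E !mxE ?eqxx ?ord0max ?ordmax0 /=.
  rewrite !mulr0 !mulr1 !add0r !addr0 !mulrN1 => /eqP e1 /eqP e2.
  have s01 : B0 ord_max ord0 = B0 ord0 ord_max.
    by rewrite -[in LHS]sB0 mxE.
  rewrite s01 eq_sym -subr_eq0 opprK -mulr2n -mulr_natr mulf_eq0 pnatr_eq0 orbF => /eqP e3.
  apply/eqP; apply: mx2P; rewrite ?mxE ?e3 ?s01 ?e1 //.
  by apply/eqP; rewrite -oppr_eq0 e2.
move=> g h Gg Gh; apply: rho_inj; rewrite ?groupM // !rho_morph //.
exact: comm_K nsc (comm _ Gg) (comm _ Gh).
Qed.

End Odd2.


Lemma sq1_scalar (F : numFieldType) (A : 'M[F]_2) :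
  \det A = 1 -> A *m A = 1 -> exists c, A = c%:M.
Proof.
move=> dA AA; have ch := CH2 A; rewrite AA dA in ch.
have e : \tr A *: A = 1 + 1 by apply/eqP; rewrite -subr_eq -ch.
have t0 : \tr A != 0.
  apply/eqP => t0; move: e; rewrite t0 scale0r => /(congr1 (fun M : 'M[F]_2 => M ord0 ord0)).
  rewrite !mxE eqxx /= => /eqP; rewrite eq_sym -mulr2n -mulr_natr mul1r pnatr_eq0 //.
exists ((\tr A)^-1 * 2%:R); rewrite -scalemx1 -scalerA -[2%:R]/(1 + 1 : F) scalerDl scale1r.
by rewrite -e scalerA mulVf // scale1r.
Qed.

Section Central.
Variables (F : numFieldType) (gT : finGroupType) (G : {group gT}) (rho : gT -> 'M[F]_2).
Hypotheses (rho_morph : {in G &, forall g h, rho (g * h)%g = rho g *m rho h})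
  (rho_inj : {in G &, injective rho})
  (rho_det : {in G, forall g, \det (rho g) = 1}).

Lemma exists_central : G :!=: 1%g ->
  exists z, [/\ z \in G, z != 1%g & {in G, forall h, (z * h = h * z)%g}].
Proof.
move=> G1; case oG : (odd #|G|).
  have [z Gz z1] := trivgPn _ G1; exists z; split => // h Gh.
  exact: (odd_abelian rho_morph rho_inj rho_det).
have [t Gt ot] : {t | t \in G & #[t]%g = 2} by apply: Cauchy; rewrite // dvdn2 oG.
exists t; split => //.
  by apply/eqP => t1; move: ot; rewrite t1 order1.
have [c rc] : exists c, rho t = c%:M.
  apply: sq1_scalar; first by rewrite rho_det.
  rewrite -rho_morph //; have -> : (t * t = t ^+ #[t])%g by rewrite ot expgS expg1.
  by rewrite expg_order (rho1 rho_morph rho_det).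
by move=> h Gh; apply: rho_inj; rewrite ?groupM // !rho_morph // rc scalar_mxC.
Qed.

Lemma rho_sub1_unit z : z \in G -> z != 1%g -> (rho z - 1) \in unitmx.
Proof.
move=> Gz z1; apply: (@unit_sub1 _ _ #[z]%g); first by rewrite rho_det.
  by rewrite order_gt0.
  by rewrite -(rhoX rho_morph rho_det _ Gz) expg_order (rho1 rho_morph rho_det).
by rewrite (rho_eq1 rho_morph rho_inj rho_det).
Qed.

End Central.


Lemma prim_root_exists (F : numClosedFieldType) n : (n > 0)%N -> exists z : F, n.-primitive_root z.
Proof.
pose p : {poly F} := 'X^n - 1; have [r Dp] := closed_field_poly_normal p.
move=> n_gt0; rewrite (monicP _) ?monicXnsubC // scale1r in Dp.
have rn1: all n.-unity_root r by apply/allP=> z; rewrite -root_prod_XsubC -Dp.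
have sz_r: (n < (size r).+1)%N.
  by rewrite -(size_prod_XsubC r id) -Dp size_XnsubC.
have [|z] := hasP (has_prim_root n_gt0 rn1 _ sz_r); last by exists z.
by rewrite -separable_prod_XsubC -Dp separable_Xn_sub_1 // pnatr_eq0 -lt0n.
Qed.

Lemma geom_sum0 (F : fieldType) (x : F) n : x ^+ n = 1 -> x != 1 -> \sum_(j < n) x ^+ j = 0.
Proof.
move=> xn x1; have := subrX1 x n; rewrite xn subrr => /esym/eqP.
by rewrite mulf_eq0 subr_eq0 (negbTE x1) /= => /eqP.
Qed.

Lemma eigen_exists (F : numClosedFieldType) (M : lmodType F) (Zf : M -> M) n (m : M) :
  (forall a u v, Zf (a *: u + v) = a *: Zf u + Zf v) ->
  (0 < n)%N -> (forall w, iter n Zf w = w) -> m != 0 ->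
  exists mu v, v != 0 /\ Zf v = mu *: v.
Proof.
move=> Zlin n0 Zn m0.
have Z0 : Zf 0 = 0.
  by have e := Zlin 1 0 0; rewrite !scale1r addr0 in e; apply: (addrI (Zf 0)); rewrite addr0 -e.
have ZD : forall u v, Zf (u + v) = Zf u + Zf v by move=> u v; have := Zlin 1 u v; rewrite !scale1r.
have ZZ : forall a u, Zf (a *: u) = a *: Zf u by move=> a u; rewrite -[_ *: u]addr0 Zlin Z0 addr0.
have Zsum : forall (I : finType) (f : I -> M), Zf (\sum_i f i) = \sum_i Zf (f i).
  by move=> I f; apply: (big_morph Zf ZD Z0).
have [w prim] := prim_root_exists F n0.
pose v (j : 'I_n) := \sum_(k < n) (w ^+ j) ^+ k *: iter k Zf m.
have eig : forall j : 'I_n, w ^+ j *: Zf (v j) = v j.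
  move=> j; set c := w ^+ j.
  have cn : c ^+ n = 1 by rewrite /c exprAC (prim_expr_order prim) expr1n.
  rewrite /v Zsum scaler_sumr.
  pose f k := c ^+ k *: iter k Zf m.
  have -> : \sum_(k < n) c *: Zf (c ^+ k *: iter k Zf m) = \sum_(k < n) f k.+1.
    by apply: eq_bigr => k _; rewrite ZZ scalerA -exprS /f iterS.
  have fn : f n = f 0%N by rewrite /f cn Zn expr0.
  apply: (addrI (f 0%N)).
  transitivity (\sum_(i < n.+1) f i).
    by rewrite big_ord_recl.
  by rewrite big_ord_recr /= fn addrC.
have sumv : \sum_(j < n) v j = n%:R *: m.
  rewrite /v exchange_big /=.
  rewrite (eq_bigr (fun k : 'I_n => (\sum_(j < n) (w ^+ k) ^+ j) *: iter k Zf m)); last first.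
    by move=> k _; rewrite scaler_suml; apply: eq_bigr => j _; rewrite exprAC.
  case: n n0 w prim Zn v eig => // n' _ w prim Zn v eig.
  rewrite big_ord_recl /= expr0 (eq_bigr (fun _ => 1)) ?sumr_const ?card_ord; last by move=> *; rewrite expr1n.
  rewrite big1 ?addr0 // => k _; rewrite geom_sum0 ?scale0r //.
    by rewrite exprAC (prim_expr_order prim) expr1n.
  by rewrite -(expr0 w) (eq_prim_root_expr prim) mod0n modn_small // /bump add1n ltnS ltn_ord.
have [j vj0] : exists j, v j != 0.
  apply/existsP; apply: contraR m0; rewrite negb_exists => /forallP allz.
  have : n%:R *: m = 0 by rewrite -sumv big1 // => j _; apply/eqP; rewrite -[_ == _]negbK allz.
  by move/eqP; rewrite scaler_eq0 pnatr_eq0 eqn0Ngt n0.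
have wj0 : w ^+ j != 0 by rewrite expf_neq0 // (prim_root_eq0 prim) -lt0n.
exists (w ^+ j)^-1, (v j); split => //.
by rewrite -{2}(eig j) scalerA mulVf // scale1r.
Qed.


Section Main.
Variables (F : numClosedFieldType) (M : lmodType F) (N : nat) (gT : finGroupType)
  (G : {group gT}) (rho : gT -> 'M[F]_2)
  (D : 'I_N -> gT -> {linear M -> M}) (P : 'S_N -> {linear M -> M})
  (X Y : 'I_N -> {linear M -> M}).
Hypotheses (HGN : is_GammaN_rep G D P) (Hsmash : smash_relations G rho D P X Y)
  (Hirr : GammaN_irreducible G D P).

Let HD1 : forall i m, D i 1%g m = m. Proof. by case: HGN. Qed.
Let HDM : forall i, {in G &, forall g h, forall m, D i (g * h)%g m = D i g (D i h m)}.
Proof. by case: HGN => _ []. Qed.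
Let HDC : forall i j, i != j -> {in G &, forall g h, forall m,
           D i g (D j h m) = D j h (D i g m)}.
Proof. by case: HGN => _ [] _ []. Qed.
Let HPD : forall s i, {in G, forall g m, P s (D (s i) g m) = D i g (P s m)}.
Proof. by case: HGN => _ [] _ [] _ [] _ []. Qed.

Definition Zl (l : seq 'I_N) (g : gT) (m : M) : M := foldr (fun j acc => D j g acc) m l.
Definition LXY i u m := Lop (fun l => X l) (fun l => Y l) i u m.

Lemma Zl_lin l g a u v : Zl l g (a *: u + v) = a *: Zl l g u + Zl l g v.
Proof. by elim: l => [//|j l IH] /=; rewrite IH linearP. Qed.

Lemma Zl_notin l g h j x : g \in G -> h \in G -> j \notin l ->
  Zl l g (D j h x) = D j h (Zl l g x).
Proof.
move=> Gg Gh; elim: l => [//|k l IH] /=; rewrite in_cons negb_or => /andP [jk jl].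
by rewrite IH // HDC // eq_sym.
Qed.

Lemma Zl_mul l g h m : uniq l -> g \in G -> h \in G -> Zl l g (Zl l h m) = Zl l (g * h)%g m.
Proof.
move=> + Gg Gh; elim: l => [//|j l IH] /= /andP [jl ul].
by rewrite Zl_notin // IH // HDM.
Qed.

Lemma Zl_one l m : Zl l 1%g m = m.
Proof. by elim: l => [//|j l IH] /=; rewrite IH HD1. Qed.

Lemma Zl_rem l g x m : g \in G -> x \in l -> Zl l g m = D x g (Zl (rem x l) g m).
Proof.
move=> Gg; elim: l => [//|y l IH]; rewrite in_cons /=.
case: (eqVneq y x) => [->|yx] xl /=; first by [].
rewrite /= in xl; rewrite IH //.
by rewrite HDC.
Qed.

Lemma Zl_perm l l' g m : g \in G -> perm_eq l l' -> Zl l g m = Zl l' g m.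
Proof.
move=> Gg; elim: l l' => [|x l IH] l' pl.
  by move: (perm_size pl) => /= /esym/size0nil ->.
have xl' : x \in l' by rewrite -(perm_mem pl) mem_head.
rewrite [RHS](Zl_rem _ Gg xl') /=; congr (D x g _); apply: IH.
by rewrite -(perm_cons x) (perm_trans pl) // perm_to_rem.
Qed.

Lemma Zl_P l s g m : g \in G -> P s (Zl l g m) = Zl (map (s^-1)%g l) g (P s m).
Proof.
move=> Gg; elim: l => [//|j l IH] /=.
by rewrite -IH -HPD // permKV.
Qed.

Lemma Zl_L l g i u m : uniq l -> g \in G ->
  Zl l g (LXY i u m) = LXY i (if i \in l then rho g *m u else u) (Zl l g m).
Proof.
move=> + Gg; elim: l => [//|j l IH] /= /andP [jl ul].
rewrite IH // /LXY Hsmash.1 // in_cons.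
case: (eqVneq i j) => [->|ij] /=; first by rewrite (negbTE jl).
by [].
Qed.


Lemma LXYZ i u a m : LXY i u (a *: m) = a *: LXY i u m.
Proof. by rewrite /LXY /Lop !linearZ /= !scalerA scalerDr !scalerA (mulrC a) (mulrC a). Qed.

Lemma LXYB i u v m : LXY i (u - v) m = LXY i u m - LXY i v m.
Proof.
rewrite /LXY /Lop !mxE !scalerBl opprD !addrA; congr (_ + _).
by rewrite addrAC.
Qed.

Variable z : gT.
Hypotheses (Gz : z \in G) (zc : {in G, forall h, (z * h = h * z)%g})
  (zu : (rho z - 1) \in unitmx).

Definition Zop := Zl (enum 'I_N) z.

Lemma Zl_D l i h m : h \in G -> Zl l z (D i h m) = D i h (Zl l z m).
Proof.
move=> Gh; elim: l => [//|j l IH] /=; rewrite IH.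
case: (eqVneq j i) => [->|ji]; last by rewrite HDC.
by rewrite -!HDM // zc.
Qed.

Lemma Zop_P s m : Zop (P s m) = P s (Zop m).
Proof.
rewrite /Zop Zl_P //; apply: Zl_perm => //.
apply: uniq_perm; first exact: enum_uniq.
  by rewrite map_inj_uniq ?enum_uniq //; exact: perm_inj.
move=> x; rewrite mem_enum; symmetry; apply/mapP; exists (s x); first by rewrite mem_enum.
by rewrite permK.
Qed.

Lemma main_zero : forall i m, X i m = 0 /\ Y i m = 0.
Proof.
have [m0 /eqP m0nz] := Hirr.1.
have Zlin : forall a u v, Zop (a *: u + v) = a *: Zop u + Zop v by move=> *; apply: Zl_lin.
have Zn : forall w, iter #[z]%g Zop w = w.
  move=> w; have -> : forall k, iter k Zop w = Zl (enum 'I_N) (z ^+ k)%g w.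
    elim=> [|k IH]; first by rewrite expg0 Zl_one.
    by rewrite iterS IH /Zop Zl_mul ?enum_uniq ?groupX // -expgS.
  by rewrite expg_order Zl_one.
have [mu [v [v0 Zv]]] := eigen_exists Zlin (order_gt0 z) Zn m0nz.
have Z0 : Zop 0 = 0.
  by have e := Zlin 1 0 0; rewrite !scale1r addr0 in e; apply: (addrI (Zop 0)); rewrite addr0 -e.
pose S := fun w => Zop w = mu *: w.
have Ssub : is_subspace S.
  split; first by rewrite /S Z0 scaler0.
  by move=> a u w; rewrite /S Zlin => -> ->; rewrite scalerDr !scalerA mulrC.
have SD : forall i g m, g \in G -> S m -> S (D i g m).
  by move=> i g m Gg; rewrite /S /Zop Zl_D // => ->; rewrite linearZ.
have SP : forall s m, S m -> S (P s m).
  by move=> s m; rewrite /S Zop_P => ->; rewrite linearZ.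
have allS : forall w, S w.
  case: (Hirr.2 S Ssub SD SP) => // h0.
  by move: v0; rewrite (h0 v Zv) eqxx.
have mu0 : mu != 0.
  apply: contraNneq v0 => mu0.
  have := Zn v; case: #[z]%g (order_gt0 z) => // n _.
  by rewrite iterS allS mu0 scale0r => <-.
have key : forall i u w, LXY i ((rho z - 1) *m u) w = 0.
  move=> i u w; rewrite mulmxBl mul1mx LXYB; apply/eqP; rewrite subr_eq0; apply/eqP.
  apply: (scalerI mu0); rewrite -[mu *: LXY i (rho z *m u) w]LXYZ -[mu *: w]allS -[mu *: LXY i u w]allS /Zop.
  by rewrite Zl_L ?enum_uniq // mem_enum.
move=> i m; split.
  have := key i (invmx (rho z - 1) *m delta_mx ord0 ord0) m.
  rewrite mulKVmx // /LXY /Lop !mxE /=.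
  by rewrite scale1r scale0r addr0.
have := key i (invmx (rho z - 1) *m delta_mx ord_max ord0) m.
rewrite mulKVmx // /LXY /Lop !mxE /=.
by rewrite scale1r scale0r add0r.
Qed.

End Main.


Theorem theorem4p1 (R : realType) (gT : finGroupType) (G : {group gT})
  (rho : gT -> 'M[R[i]]_2)
  (rho_morph : {in G &, forall g h, rho (g * h)%g = rho g *m rho h})
  (rho_inj : {in G &, injective rho})
  (rho_det : {in G, forall g, \det (rho g) = 1})
  (G_nontriv : G :!=: 1%G)
  (k : R[i]) (c : gT -> R[i])
  (c_class : {in G &, forall g h, g != 1%g -> c (g ^ h)%g = c g})
  (N : nat) (M : lmodType R[i])
  (D : 'I_N -> gT -> {linear M -> M}) (P : 'S_N -> {linear M -> M})
  (X Y : 'I_N -> {linear M -> M})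
  (HGN : is_GammaN_rep G D P)
  (Hsmash : smash_relations G rho D P X Y)
  (HH : H_relations G rho k c D P X Y)
  (Hirr : GammaN_irreducible G D P) :
  forall (i : 'I_N) (m : M), X i m = 0 /\ Y i m = 0.
Proof.
have [z [Gz z1 zc]] := exists_central rho_morph rho_inj rho_det G_nontriv.
have zu := rho_sub1_unit rho_morph rho_inj rho_det Gz z1.
exact: (main_zero HGN Hsmash Hirr Gz zc zu).
Qed.
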